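(* Let $M,N,d$ be positive integers with $d>MN$. For $i=1,\dots,M$ let $X_i\in\mathbb{R}^{N\times d}$ and $y_i\in\mathbb{R}^N$, and suppose the stacked matrix $X_c=[X_1^T,\dots,X_M^T]^T\in\mathbb{R}^{MN\times d}$ has full row rank $MN$; let $y_c=[y_1^T,\dots,y_M^T]^T$. Consider Local-GD for linear regression with $w_0^0=0$: for $k=0,1,2,\dots$ each node $i$ runs gradient descent $w\mapsto w-\eta\nabla f_i(w)$ on $f_i(w)=\frac{1}{2N}\|y_i-X_iw\|^2$ initialized at $w_0^k$, with a constant step size small enough for convergence, until convergence, and sets $w_i^{k+1}$ to be the limit; then $w_0^{k+1}=\frac1M\sum_{i=1}^M w_i^{k+1}$. Let $w_c=X_c^T(X_cX_c^T)^{-1}y_c$ be the centralized model (the minimum-Euclidean-norm solution of $X_cw=y_c$, equivalently the limit of gradient descent from $0$ on the total squared loss). Then $w_0^K\to w_c$ as $K\to\infty$.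
   Context: Distributed setting with $M$ compute nodes; node $i$ holds data matrix $X_i$ (rows are samples) and labels $y_i$. Each local problem is solved to convergence in every communication round. *)

(* Defs.v *)
From HB Require Import structures.
From mathcomp Require Import all_boot all_order all_algebra.
From mathcomp Require Import all_classical all_reals all_analysis.
Set Implicit Arguments. Unset Strict Implicit. Unset Printing Implicit Defensive.
Import Order.TTheory GRing.Theory Num.Theory.
Import numFieldNormedType.Exports.
Local Open Scope classical_set_scope.
Local Open Scope ring_scope.

Section LocalGD.
Variable R : realType.

(* gradient of f(w) = 1/(2N) ||y - X w||^2, i.e. -(1/N) X^T (y - X w) *)
Definition lsq_grad (N d : nat) (X : 'M[R]_(N, d)) (y : 'cV[R]_N) (w : 'cV[R]_d)
  : 'cV[R]_d := - (N%:R^-1) *: (X^T *m (y - X *m w)).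

Definition gd_step (N d : nat) (eta : R) (X : 'M[R]_(N, d)) (y : 'cV[R]_N)
  (w : 'cV[R]_d) : 'cV[R]_d := w - eta *: lsq_grad X y w.

Definition gd_seq (N d : nat) (eta : R) (X : 'M[R]_(N, d)) (y : 'cV[R]_N)
  (w0 : 'cV[R]_d) (t : nat) : 'cV[R]_d := iter t (gd_step eta X y) w0.

(* convergence of a sequence of vectors in R^d (coordinatewise = in norm) *)
Definition cV_cvg_to (d : nat) (u : nat -> 'cV[R]_d) (l : 'cV[R]_d) : Prop :=
  forall j : 'I_d, ((fun t : nat => u t j ord0 : R) @ \oo --> (l j ord0 : R)).

(* the limit of a sequence of vectors (meaningful when it converges) *)
Definition cV_lim (d : nat) (u : nat -> 'cV[R]_d) : 'cV[R]_d :=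
  \col_(j < d) lim ((fun t : nat => u t j ord0 : R) @ \oo).

Fixpoint local_gd (M N d : nat) (eta : R) (X : 'I_M -> 'M[R]_(N, d))
  (y : 'I_M -> 'cV[R]_N) (k : nat) : 'cV[R]_d :=
  match k with
  | 0 => 0
  | k'.+1 => M%:R^-1 *:
      \sum_(i < M) cV_lim (gd_seq eta (X i) (y i) (local_gd eta X y k'))
  end.

End LocalGD.

(* Main.v *)
Require Import Defs.
From HB Require Import structures.
From mathcomp Require Import all_boot all_order all_algebra.
From mathcomp Require Import all_classical all_reals all_analysis.
From mathcomp Require Import lra ring.
Import Order.TTheory GRing.Theory Num.Theory.
Import numFieldNormedType.Exports.
Local Open Scope classical_set_scope.
Local Open Scope ring_scope.
Set Implicit Arguments. Unset Strict Implicit. Unset Printing Implicit Defensive.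
Section H.
Variable R : realType.
Lemma cvg_sumR (I : Type) (r : seq I) (P : pred I) (f : I -> nat -> R) (a : I -> R) :
  (forall i, P i -> f i @ \oo --> a i) ->
  (fun t => \sum_(i <- r | P i) f i t) @ \oo --> \sum_(i <- r | P i) a i.
Proof.
move=> h; elim: r => [|i r IH].
  rewrite big_nil; under eq_cvg do rewrite big_nil; exact: cvg_cst.
rewrite big_cons; under eq_cvg do rewrite big_cons.
case: ifPn => Pi //.
exact: cvgD (h _ Pi) IH.
Qed.

Lemma cV_aff (m d : nat) (A : 'M[R]_(m, d)) (b : 'cV[R]_m) (u : nat -> 'cV[R]_d) l :
  cV_cvg_to u l -> cV_cvg_to (fun t => A *m u t + b) (A *m l + b).
Proof.
move=> h j; rewrite !mxE; under eq_cvg do rewrite !mxE.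
apply: cvgD; last exact: cvg_cst.
apply: cvg_sumR => k _; apply: cvgM; [exact: cvg_cst | exact: h].
Qed.

Lemma cV_lim_eq (d : nat) (u : nat -> 'cV[R]_d) l : cV_cvg_to u l -> cV_lim u = l.
Proof.
move=> h; apply/matrixP => j k; rewrite mxE (ord1 k); exact: cvg_lim (h j).
Qed.

Lemma cV_uniq (d : nat) (u : nat -> 'cV[R]_d) l1 l2 :
  cV_cvg_to u l1 -> cV_cvg_to u l2 -> l1 = l2.
Proof. by move=> h1 h2; rewrite -(cV_lim_eq h1) -(cV_lim_eq h2). Qed.

Lemma cV_shift (d : nat) (u : nat -> 'cV[R]_d) l :
  cV_cvg_to u l -> cV_cvg_to (fun t => u t.+1) l.
Proof. move=> h j; have := h j; by rewrite -cvg_shiftS. Qed.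

Lemma cV_ext (d : nat) (u v : nat -> 'cV[R]_d) l :
  (forall t, u t = v t) -> cV_cvg_to u l -> cV_cvg_to v l.
Proof. by move=> e h j; under eq_cvg do rewrite -e; exact: h. Qed.

Definition dotv (d : nat) (u v : 'cV[R]_d) : R := (u^T *m v) ord0 ord0.
Definition sq (d : nat) (u : 'cV[R]_d) : R := dotv u u.

Lemma dotvE d (u v : 'cV[R]_d) : dotv u v = \sum_j u j ord0 * v j ord0.
Proof. by rewrite /dotv mxE; apply: eq_bigr => j _; rewrite mxE. Qed.

Lemma sq_ge0 d (u : 'cV[R]_d) : 0 <= sq u.
Proof. by rewrite /sq dotvE; apply: sumr_ge0 => j _; rewrite -expr2 sqr_ge0. Qed.

Lemma sq_coord d (u : 'cV[R]_d) j : u j ord0 ^+ 2 <= sq u.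
Proof.
rewrite /sq dotvE (bigD1 j) //= -expr2 lerDl.
by apply: sumr_ge0 => k _; rewrite -expr2 sqr_ge0.
Qed.

Lemma sq_eq0 d (u : 'cV[R]_d) : sq u = 0 -> u = 0.
Proof.
move=> h; apply/matrixP => j k; rewrite (ord1 k) mxE.
have := sq_coord u j; rewrite h => h2.
have : u j ord0 ^+ 2 = 0 by apply/eqP; rewrite eq_le h2 sqr_ge0.
by move/eqP; rewrite expf_eq0 /= => /eqP.
Qed.

Lemma sq_cvg0 d (u : nat -> 'cV[R]_d) :
  (fun t => sq (u t)) @ \oo --> 0 -> cV_cvg_to u 0.
Proof.
move=> h j; rewrite mxE.
apply/cvgrPdist_lt => e he.
move/cvgrPdist_lt: h => /(_ (e ^+ 2) (exprn_gt0 2 he)).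
apply: filterS => t; rewrite !sub0r !normrN (ger0_norm (sq_ge0 _)) => ht.
have := sq_coord (u t) j => hc.
rewrite ltr_norml; apply/andP; split; nra.
Qed.

Lemma cvg0_sq d (u : nat -> 'cV[R]_d) :
  cV_cvg_to u 0 -> (fun t => sq (u t)) @ \oo --> 0.
Proof.
move=> h; under eq_cvg do rewrite /sq dotvE.
have h' : forall j : 'I_d, (fun t => u t j ord0) @ \oo --> (0:R).
  by move=> j; have := h j; rewrite mxE.
have := @cvg_sumR 'I_d (index_enum _) xpredT (fun j t => u t j ord0 * u t j ord0)
  (fun _ => 0 * 0) (fun j _ => cvgM (h' j) (h' j)).
rewrite big1 // => [|j _]; last by rewrite mulr0.
by move=> H; apply: H.
Qed.

Lemma sum_sqr_le (M : nat) (a : 'I_M -> R) :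
  (\sum_i a i) ^+ 2 <= M%:R * \sum_i a i ^+ 2.
Proof.
have h2 : 2 * (\sum_i a i) ^+ 2 <= 2 * (M%:R * \sum_i a i ^+ 2).
  rewrite expr2 mulr_suml mulr_sumr.
  apply: (@le_trans _ _ (\sum_i \sum_k (a i ^+ 2 + a k ^+ 2))).
    apply: ler_sum => i _; rewrite mulr_sumr mulr_sumr; apply: ler_sum => k _.
    have := sqr_ge0 (a i - a k); rewrite sqrrB; lra.
  rewrite (eq_bigr (fun i => a i ^+ 2 *+ M + \sum_k a k ^+ 2)); last first.
    by move=> i _; rewrite big_split /= sumr_const card_ord.
  rewrite big_split /= sumrMnl sumr_const card_ord.
  set S := (\sum_(i < M) a i ^+ 2).
  rewrite -[S *+ M]mulr_natl; lra.
lra.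
Qed.

Lemma sq_sum_le (M d : nat) (s : 'I_M -> 'cV[R]_d) :
  sq (\sum_i s i) <= M%:R * \sum_i sq (s i).
Proof.
rewrite /sq dotvE.
under eq_bigr do rewrite summxE -expr2.
apply: (@le_trans _ _ (\sum_j M%:R * \sum_i s i j ord0 ^+ 2)).
  by apply: ler_sum => j _; apply: sum_sqr_le.
rewrite -mulr_sumr exchange_big /=; apply: ler_wpM2l; first exact: ler0n.
by apply: ler_sum => i _; rewrite dotvE; apply: ler_sum => j _; rewrite expr2.
Qed.


Lemma XXt_unit (n d : nat) (X : 'M[R]_(n, d)) : row_free X -> X *m X^T \in unitmx.
Proof.
move=> hX; rewrite -row_free_unit; apply: inj_row_free => v hv.
have h0 : sq ((v *m X)^T) = 0.
  rewrite /sq /dotv trmxK trmx_mul mulmxA -(mulmxA v) hv mul0mx mxE //.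
have := sq_eq0 h0 => /(congr1 trmx); rewrite trmxK trmx0 => hvX.
by apply: (row_free_inj hX); rewrite hvX mul0mx.
Qed.

Lemma gd_step_aff (N d : nat) (eta : R) (X : 'M[R]_(N, d)) y v :
  gd_step eta X y v = (1%:M - (eta / N%:R) *: (X^T *m X)) *m v + (eta / N%:R) *: (X^T *m y).
Proof.
rewrite /gd_step /lsq_grad scaleNr scalerN opprK scalerA mulmxBr mulmxBl mul1mx scalerBr.
rewrite -scalemxAl -mulmxA; set c := _ / _.
by rewrite addrA addrAC.
Qed.


Lemma gd_limit (N d : nat) (eta : R) (X : 'M[R]_(N, d)) y w l :
  (0 < N)%N -> 0 < eta -> row_free X ->
  cV_cvg_to (gd_seq eta X y w) l ->
  l = w + X^T *m invmx (X *m X^T) *m (y - X *m w).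
Proof.
move=> hN heta hX hl.
have hG := XXt_unit hX.
set G := X *m X^T in hG *.
set c := eta / N%:R.
have hc : c != 0 by rewrite /c mulf_neq0 ?invr_eq0 ?pnatr_eq0 -?lt0n ?gt_eqF.
set B := 1%:M - c *: (X^T *m X).
set b := c *: (X^T *m y).
have hS : forall t, gd_seq eta X y w t.+1 = B *m gd_seq eta X y w t + b.
  by move=> t; rewrite /gd_seq iterS gd_step_aff.
have hl2 : cV_cvg_to (fun t => gd_seq eta X y w t.+1) (B *m l + b).
  by apply: (cV_ext _ (cV_aff (A:=B) (b:=b) hl)) => t; rewrite hS.
have el : l = B *m l + b := cV_uniq (cV_shift hl) hl2.
have hXl : X *m l = y.
  have h1 : c *: (X^T *m (X *m l - y)) = 0.
    move/eqP: el; rewrite /B /b mulmxBl mul1mx -scalemxAl -mulmxA.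
    rewrite mulmxBr scalerBr -subr_eq0 => /eqP H; rewrite -H.
    by rewrite opprD addrA opprB [l + _]addrC subrK.
  move/eqP: h1; rewrite scaler_eq0 (negbTE hc) /= => /eqP h1.
  have : invmx G *m X *m (X^T *m (X *m l - y)) = 0 by rewrite h1 mulmx0.
  rewrite !mulmxA -[invmx G *m X *m X^T]mulmxA -/G (mulVmx hG) mul1mx => /eqP.
  by rewrite subr_eq0 => /eqP.
set P := X^T *m invmx G *m X.
have PXt : P *m X^T = X^T by rewrite /P -!mulmxA -/G (mulVmx hG) mulmx1.
have XP : X *m P = X by rewrite /P !mulmxA -/G (mulmxV hG) mul1mx.
have PB : P *m B = B *m P.
  rewrite /B mulmxBr mulmxBl mulmx1 mul1mx -scalemxAr -scalemxAl.
  by rewrite mulmxA PXt -[X^T *m X *m P]mulmxA XP.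
have Pb : P *m b = b by rewrite /b -scalemxAr mulmxA PXt.
have Bq : B *m (w - P *m w) = w - P *m w.
  have Xq : X *m (w - P *m w) = 0 by rewrite mulmxBr mulmxA XP subrr.
  by rewrite /B mulmxBl mul1mx -scalemxAl -(mulmxA X^T) Xq mulmx0 scaler0 subr0.
have hQ : forall t, P *m gd_seq eta X y w t + (w - P *m w) = gd_seq eta X y w t.
  elim => [|t IH]; first by rewrite /gd_seq /= addrC subrK.
  rewrite hS -[in RHS]IH (mulmxDr B) Bq (mulmxDr P) mulmxA PB -mulmxA Pb.
  by rewrite addrAC.
have hl3 := cV_aff (A:=P) (b:=w - P *m w) hl.
have el2 : l = P *m l + (w - P *m w).
  exact: cV_uniq hl (cV_ext hQ hl3).
rewrite {1}el2 addrCA -mulmxBr; congr (w + _).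
by rewrite /P -!mulmxA mulmxBr hXl.
Qed.


Lemma dotvC d (u v : 'cV[R]_d) : dotv u v = dotv v u.
Proof. by rewrite !dotvE; apply: eq_bigr => j _; rewrite mulrC. Qed.

Lemma dotvDl d (u v w : 'cV[R]_d) : dotv (u + v) w = dotv u w + dotv v w.
Proof. by rewrite !dotvE -big_split; apply: eq_bigr => j _; rewrite !mxE mulrDl. Qed.

Lemma dotvZl d a (u w : 'cV[R]_d) : dotv (a *: u) w = a * dotv u w.
Proof. by rewrite !dotvE mulr_sumr; apply: eq_bigr => j _; rewrite !mxE mulrA. Qed.

Lemma dotvZr d a (u w : 'cV[R]_d) : dotv u (a *: w) = a * dotv u w.
Proof. by rewrite dotvC dotvZl dotvC. Qed.

Lemma dotv_suml d (I : finType) (u : I -> 'cV[R]_d) w :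
  dotv (\sum_i u i) w = \sum_i dotv (u i) w.
Proof.
rewrite dotvE; under eq_bigr do rewrite summxE mulr_suml.
by rewrite exchange_big; apply: eq_bigr => i _; rewrite dotvE.
Qed.

Lemma dotv_mul n d (A : 'M[R]_(n, d)) u v : dotv (A *m u) v = dotv u (A^T *m v).
Proof. by rewrite /dotv trmx_mul mulmxA. Qed.

Lemma sq_expand d (e s : 'cV[R]_d) b :
  sq (e + b *: s) = sq e + 2 * b * dotv e s + b ^+ 2 * sq s.
Proof.
rewrite /sq dotvDl dotvC dotvDl dotvZl (dotvC (b *: s)) dotvDl !dotvZl (dotvC s e).
rewrite !dotvZr -/(sq e) -/(sq s); ring.
Qed.

Definition projP n d (X : 'M[R]_(n, d)) := X^T *m invmx (X *m X^T) *m X.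

Section Proj.
Variables (n d : nat) (X : 'M[R]_(n, d)).
Hypothesis hG : X *m X^T \in unitmx.

Lemma projP_Xt : projP X *m X^T = X^T.
Proof. by rewrite /projP -!mulmxA (mulVmx hG) mulmx1. Qed.

Lemma X_projP : X *m projP X = X.
Proof. by rewrite /projP !mulmxA (mulmxV hG) mul1mx. Qed.

Lemma projP_tr : (projP X)^T = projP X.
Proof. by rewrite /projP !trmx_mul trmx_inv trmx_mul !trmxK mulmxA. Qed.

Lemma projP_idem : projP X *m projP X = projP X.
Proof. by rewrite {1}/projP -mulmxA X_projP. Qed.

Lemma dotv_projP (e : 'cV[R]_d) : dotv e (projP X *m e) = sq (projP X *m e).
Proof. by rewrite /sq dotv_mul projP_tr mulmxA projP_idem. Qed.

End Proj.


Definition Esel (M N : nat) (i : 'I_M) : 'M[R]_(\sum_(j < M) N, N) :=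
  \mxcol_j (if j == i then 1%:M else 0 : 'M[R]_(N, N)).

Lemma Esel_col M N n (i : 'I_M) (B : 'I_M -> 'M[R]_(N, n)) :
  (Esel N i)^T *m \mxcol_j B j = B i.
Proof.
rewrite /Esel tr_mxcol mul_mxrow_mxcol (bigD1 i) //= eqxx trmx1 mul1mx.
by rewrite big1 ?addr0 // => j /negbTE ->; rewrite trmx0 mul0mx.
Qed.

Lemma Esel_tr M N n (i : 'I_M) (B : 'I_M -> 'M[R]_(N, n)) :
  (\mxcol_j B j)^T *m Esel N i = (B i)^T.
Proof. by rewrite -[LHS]trmxK trmx_mul trmxK Esel_col. Qed.

Lemma Esel_id M N (i : 'I_M) : (Esel N i)^T *m Esel N i = 1%:M.
Proof. by rewrite {2}/Esel Esel_col eqxx. Qed.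

Lemma gram_col M N n (B : 'I_M -> 'M[R]_(N, n)) :
  (\mxcol_j B j)^T *m \mxcol_j B j = \sum_j (B j)^T *m B j.
Proof. by rewrite tr_mxcol mul_mxrow_mxcol. Qed.

Lemma cV_lin m d (A : 'M[R]_(m, d)) (u : nat -> 'cV[R]_d) l :
  cV_cvg_to u l -> cV_cvg_to (fun t => A *m u t) (A *m l).
Proof.
move=> h; have := cV_aff (A:=A) (b:=0) h; rewrite addr0.
by apply: cV_ext => t; rewrite addr0.
Qed.

End H.

Unset Implicit Arguments.

Theorem theorem1 (R : realType) (M N d : nat)
  (hM : (0 < M)%N) (hN : (0 < N)%N) (hd : (M * N < d)%N)
  (X : 'I_M -> 'M[R]_(N, d)) (y : 'I_M -> 'cV[R]_N)
  (hrank : row_free (\mxcol_(i < M) X i))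
  (eta : R) (heta : 0 < eta)
  (hconv : forall (i : 'I_M) (w : 'cV[R]_d),
      exists l : 'cV[R]_d, cV_cvg_to (gd_seq eta (X i) (y i) w) l) :
  let Xc := \mxcol_(i < M) X i in
  let yc := \mxcol_(i < M) y i in
  let wc := Xc^T *m invmx (Xc *m Xc^T) *m yc in
  cV_cvg_to (fun K => local_gd eta X y K) wc.
Proof.
move=> Xc yc wc.
have hGc : Xc *m Xc^T \in unitmx := XXt_unit hrank.
have hXi : forall i, row_free (X i).
  move=> i; apply: inj_row_free => v hv.
  have h1 : (v *m (Esel R N i)^T) *m Xc = 0 *m Xc by rewrite -mulmxA Esel_col hv mul0mx.
  have h2 := row_free_inj hrank h1.
  by rewrite -[v]mulmx1 -(Esel_id R N i) mulmxA h2 mul0mx.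
have hGi : forall i, X i *m (X i)^T \in unitmx := fun i => XXt_unit (hXi i).
have hXwc : Xc *m wc = yc by rewrite /wc !mulmxA (mulmxV hGc) mul1mx.
have hXiwc : forall i, X i *m wc = y i.
  by move=> i; rewrite -(Esel_col i X) -mulmxA hXwc Esel_col.
have node : forall i w, cV_lim (gd_seq eta (X i) (y i) w) = w - projP (X i) *m (w - wc).
  move=> i w; have [l hl] := hconv i w.
  rewrite (cV_lim_eq hl) (gd_limit hN heta (hXi i) hl) -(hXiwc i) -mulmxBr /projP -mulmxA.
  by rewrite !mulmxA -mulmxN opprB.
have hMn : (M%:R : R) != 0 by rewrite pnatr_eq0 -lt0n.
pose e k := local_gd eta X y k - wc.
pose P i := projP (X i).
have he : forall k, e k.+1 = e k + (- M%:R^-1) *: \sum_i P i *m e k.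
  move=> k; rewrite /e /=.
  under eq_bigr do rewrite node.
  rewrite sumrB sumr_const card_ord scalerBr -[local_gd eta X y k *+ M]scaler_nat scalerA mulVf // scale1r.
  by rewrite scaleNr addrAC.
have energy : forall k,
    sq (e k.+1) <= sq (e k) - M%:R^-1 * \sum_i sq (P i *m e k).
  move=> k; rewrite he sq_expand dotvC dotv_suml.
  under eq_bigr do rewrite dotvC dotv_projP //.
  have hs := sq_sum_le (fun i => projP (X i) *m e k).
  set T := \sum_i sq (projP (X i) *m e k) in hs *.
  set a := M%:R^-1.
  have ha : 0 <= a by rewrite /a invr_ge0 ler0n.
  have h1 := ler_wpM2l (exprn_ge0 2 ha) hs.
  have h2 : a ^+ 2 * (M%:R * T) = a * T.
    by rewrite /a; field.
  rewrite sqrrN; lra.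
pose a k := sq (e k).
have hdec : nonincreasing_seq a.
  apply/nonincreasing_seqP => k; rewrite /a.
  apply: (le_trans (energy k)); rewrite lerBlDr lerDl.
  by apply: mulr_ge0; [rewrite invr_ge0 ler0n | apply: sumr_ge0 => i _; apply: sq_ge0].
have hlb : has_lbound (range a).
  by exists 0; move=> _ [k _ <-]; exact: sq_ge0.
have hcv := nonincreasing_is_cvgn hdec hlb.
have hcv' : (fun k => a k.+1) @ \oo --> limn a.
  by have := hcv; rewrite -cvg_shiftS.
have hdiff : (fun k => a k - a k.+1) @ \oo --> 0.
  have := cvgB hcv hcv'; rewrite subrr; apply.
have hPi : forall i, (fun k => sq (P i *m e k)) @ \oo --> 0.
  move=> i; apply: (@squeeze_cvgr _ _ _ _ (fun=> 0) (fun k => M%:R * (a k - a k.+1))).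
  - apply: nearW => k; rewrite sq_ge0 /=.
    have := energy k; rewrite -/(a k) -/(a k.+1) => hk.
    have hT : sq (P i *m e k) <= \sum_j sq (P j *m e k).
      by rewrite (bigD1 i) //= lerDl; apply: sumr_ge0 => j _; apply: sq_ge0.
    apply: (le_trans hT); rewrite -[\sum_j _](mulVKf hMn).
    apply: ler_wpM2l; [exact: ler0n | lra].
  - exact: cvg_cst.
  - have := cvgM (cvg_cst (M%:R : R)) hdiff; rewrite mulr0; apply.
have hXe : forall i, (fun k => sq (X i *m e k)) @ \oo --> 0.
  move=> i; apply: cvg0_sq.
  have := cV_lin (A := X i) (sq_cvg0 (hPi i)); rewrite mulmx0.
  by apply: cV_ext => k; rewrite mulmxA X_projP.
have hsq : forall v, sq (Xc *m v) = \sum_i sq (X i *m v).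
  move=> v; rewrite /sq dotv_mul /Xc (mulmxA _ _ v) gram_col mulmx_suml dotvC dotv_suml.
  by apply: eq_bigr => i _; rewrite [RHS]dotv_mul mulmxA [RHS]dotvC.
have hsum : (fun k => sq (Xc *m e k)) @ \oo --> 0.
  under eq_cvg do rewrite hsq.
  have := @cvg_sumR R 'I_M (index_enum _) xpredT (fun i k => sq (X i *m e k))
    (fun _ => 0) (fun i _ => hXe i).
  rewrite big1 //; apply.
have hec : cV_cvg_to (fun k => Xc *m e k) 0 := sq_cvg0 hsum.
have PcPi : forall i, projP Xc *m P i = P i.
  move=> i.
  have PcXit : projP Xc *m (Xc^T *m Esel R N i) = Xc^T *m Esel R N i.
    by rewrite mulmxA projP_Xt.
  rewrite /Xc Esel_tr in PcXit.
  have -> : P i = (X i)^T *m (invmx (X i *m (X i)^T) *m X i) by rewrite /P /projP mulmxA.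
  by rewrite mulmxA PcXit.
have hinv : forall k, projP Xc *m e k = e k.
  elim => [|k IH].
    rewrite /e /= add0r mulmxN; congr (- _).
    by rewrite /projP -!mulmxA hXwc /wc mulmxA.
  by rewrite (he k) mulmxDr IH -scalemxAr mulmx_sumr; congr (_ + _ *: _); apply: eq_bigr => i _; rewrite mulmxA PcPi.
have := cV_lin (A := Xc^T *m invmx (Xc *m Xc^T)) hec; rewrite mulmx0 => h0.
have h1 : cV_cvg_to e 0.
  by apply: cV_ext h0 => k; rewrite -[RHS]hinv /projP mulmxA.
have := cV_aff (A := 1%:M) (b := wc) h1; rewrite mulmx0 add0r.
by apply: cV_ext => k; rewrite mul1mx /e subrK.
Qed.
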